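(* Let $p\neq q$ be primes and $m,n$ positive integers. Then the quotient $Q(x)=\mathrm P_{\langle p^m,q^n\rangle}(x)/\Phi_{p^mq^n}(x)$ is a monic polynomial in $\mathbb Z[x]$ with constant coefficient $1$, and its nonzero coefficients alternate between $1$ and $-1$.
   Context: For a numerical semigroup $S$ (submonoid of $(\mathbb N,+)$ with finite complement), $\mathrm P_S(x)=(1-x)\sum_{s\in S}x^s$. $\langle a,b\rangle$ is the submonoid generated by $a,b$. $\Phi_N$ denotes the $N$-th cyclotomic polynomial. *)

(* Defs.v *)
From mathcomp Require Import all_boot all_order all_algebra all_field.
Set Implicit Arguments. Unset Strict Implicit. Unset Printing Implicit Defensive.
Import GRing.Theory Num.Theory.
Local Open Scope ring_scope.

Definition in_sg2 (a b k : nat) : bool :=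
  [exists i : 'I_k.+1, exists j : 'I_k.+1, k == (i * a + j * b)%N].

(* Coefficient of x^k in (1 - x) * sum_{s in S} x^s, S = <a,b>. *)
Definition sgP_coef (a b k : nat) : int :=
  (in_sg2 a b k)%:Z - (if k is k'.+1 then (in_sg2 a b k')%:Z else 0).

(* For coprime a, b >= 1 every k with
   k >= (a-1)(b-1) lies in <a,b>, so sgP_coef a b k = 0 for k > (a-1)(b-1);
   hence truncating at degree < a*b+1 loses nothing. *)
Definition sgP (a b : nat) : {poly int} := \poly_(k < (a * b).+1) sgP_coef a b k.

(* Main.v *)
Require Import Defs.
From mathcomp Require Import all_boot all_order all_algebra all_field.
From mathcomp Require Import ring zify.
Import GRing.Theory Num.Theory.
Local Open Scope ring_scope.

Lemma geomX (c k : nat) :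
  (\sum_(i < k) 'X^(i * c)) * ('X^c - 1) = 'X^(k * c) - 1 :> {poly int}.
Proof.
elim: k => [|k IH]; first by rewrite big_ord0 mul0r mul0n expr0 subrr.
rewrite big_ord_recr /= mulrDl IH mulrBr mulr1 -exprD mulSn [(c + _)%N]addnC.
by rewrite addrC addrA subrK.
Qed.

Lemma mod_cancel (c d x y : nat) : coprime c d ->
  (x * c == y * c %[mod d]) = (x == y %[mod d]).
Proof.
move=> co; wlog le: x y / (y <= x)%N.
  move=> H; case: (leqP y x) => [/H//|/ltnW /H].
  by rewrite eq_sym => ->; rewrite eq_sym.
rewrite !eqn_mod_dvd ?leq_mul2r ?le ?orbT // -mulnBl Gauss_dvdl //.
by rewrite coprime_sym.
Qed.

Lemma mod_cancel2 (c d x y : nat) : (0 < c)%N ->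
  (x * c == y * c %[mod d * c]) = (x == y %[mod d]).
Proof.
by move=> c0; rewrite -!muln_modl eqn_pmul2r.
Qed.

Section Res.
Variables (T : finType) (a : nat) (e : T -> nat).
Hypothesis a0 : (0 < a)%N.
Hypothesis einj : forall x y, e x = e y %[mod a] -> x = y.

Lemma res_onto : #|T| = a -> forall N, exists x, e x = N %[mod a].
Proof.
move=> cT N.
pose f (x : T) : 'I_a := Ordinal (ltn_pmod (e x) a0).
have finj : injective f by move=> x y /(congr1 val) /= h; exact: einj.
have := inj_card_onto finj _ (Ordinal (ltn_pmod N a0)).
rewrite card_ord cT leqnn => /(_ isT) /codomP [x /(congr1 val) /= hx].
by exists x.
Qed.

Definition tt N := [exists x, (e x <= N)%N && (e x == N %[mod a])].
Definition hh N := [exists x, e x == N].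

Lemma tt_rec N : tt N = hh N || ((a <= N)%N && tt (N - a)).
Proof.
apply/idP/idP.
  case/existsP=> x /andP[le eqm].
  case: (eqVneq (e x) N) => [ex|ne].
    by apply/orP; left; apply/existsP; exists x; rewrite ex.
  have ltN : (e x < N)%N by rewrite ltn_neqAle ne.
  move: (eqm); rewrite eq_sym eqn_mod_dvd // => dv.
  have : (a <= N - e x)%N by apply: dvdn_leq => //; rewrite subn_gt0.
  move=> h; apply/orP; right; apply/andP; split; first by lia.
  apply/existsP; exists x; apply/andP; split; first by lia.
  rewrite eq_sym (eqn_mod_dvd _ (_ : e x <= N - a)%N); last by lia.
  have -> : (N - a - e x = (N - e x) - a)%N by lia.
  by rewrite dvdn_sub ?dvdnn.
case/orP.
  by case/existsP=> x /eqP ex; apply/existsP; exists x; rewrite ex leqnn eqxx.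
case/andP=> aN /existsP [x /andP[le eqm]].
apply/existsP; exists x; apply/andP; split; first by lia.
rewrite (eqP eqm); have {2}-> : N = ((N - a) + a)%N by lia.
by rewrite modnDr.
Qed.

Lemma tt_excl N : hh N -> ~~ ((a <= N)%N && tt (N - a)).
Proof.
case/existsP=> x /eqP ex; apply/negP; case/andP=> aN /existsP [y /andP[le eqm]].
have : y = x.
  apply: einj; rewrite (eqP eqm) ex.
  have {2}-> : N = ((N - a) + a)%N by lia.
  by rewrite modnDr.
move=> yx; move: le; rewrite yx ex; lia.
Qed.

Lemma tt_recZ N : ((tt N)%:Z = (hh N)%:Z + ((a <= N)%N && tt (N - a))%:Z)%R.
Proof.
rewrite tt_rec; case hN: (hh N) => /=.
  by have := tt_excl N hN; case: (_ && _).
by case: (_ && _).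
Qed.

Lemma coef_sumX N : (\sum_(x : T) 'X^(e x) : {poly int})`_N = (hh N)%:Z.
Proof.
rewrite coef_sum; case hN: (hh N).
  case/existsP: hN => x /eqP ex.
  rewrite (bigD1 x) //= coefXn ex eqxx big1 ?addr0 // => y yx.
  rewrite coefXn; case: eqP => // ey; case/eqP: yx; apply: einj.
  by rewrite -ey ex.
rewrite big1 // => y _; rewrite coefXn; case: eqP => // ey.
by move/negbT: hN; case/existsP; exists y; rewrite -ey.
Qed.

End Res.

Lemma poly_rec (C H : {poly int}) (t h : nat -> bool) (a : nat) : (0 < a)%N ->
  (forall N, C`_N = (t N)%:Z - (if N is N'.+1 then (t N')%:Z else 0)) ->
  (forall N, H`_N = (h N)%:Z) ->
  (forall N, (t N)%:Z = (h N)%:Z + ((a <= N)%N && t (N - a)%N)%:Z) ->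
  C * ('X^a - 1) = ('X - 1) * H.
Proof.
move=> a0 hC hH hr; apply/polyP => N.
rewrite mulrBr mulrBl mulr1 mul1r !coefB coefMXn [('X * H)]mulrC coefMX.
case: N => [|N].
  by rewrite a0 hC hH hr /= leqNgt a0 /= addr0 subr0.
rewrite /= [C`_N.+1]hC !hH hr (hr N).
case: (ltngtP N.+1 a) => [Na|aN|<-].
- have -> : (a <= N)%N = false by lia.
  rewrite /=; ring.
- have -> : (N.+1 - a = (N - a).+1)%N by lia.
  have -> : (a <= N)%N = true by lia.
  rewrite hC /=.
  rewrite /=; ring.
- rewrite subnn hC ltnn /=; ring.
Qed.

Lemma prod_div (F : nat -> {poly int}) N M : (0 < N)%N -> (N < M)%N ->
  \prod_(d <- divisors N) F d = \prod_(d < M | (d %| N)%N) F d.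
Proof.
move=> N0 NM; rewrite -(big_mkord (fun d => (d %| N)%N)) -[RHS]big_filter.
apply: perm_big; apply: uniq_perm; first exact: divisors_uniq.
  by rewrite filter_uniq // iota_uniq.
move=> d; rewrite mem_filter mem_iota -dvdn_divisors // add0n.
case dv: (d %| N)%N => //=; have := dvdn_leq N0 dv; lia.
Qed.

Lemma prodU (I : finType) (P Q : pred I) (F : I -> {poly int}) :
  (\prod_(i | P i) F i) * (\prod_(i | Q i) F i) =
  (\prod_(i | P i || Q i) F i) * (\prod_(i | P i && Q i) F i).
Proof.
rewrite (bigID Q (fun i => P i || Q i)) /= (bigID Q P) /=.
have e1 : \prod_(i | (P i || Q i) && Q i) F i = \prod_(i | Q i) F i.
  by apply: eq_bigl => i; case: (P i); case: (Q i).
have e2 : \prod_(i | (P i || Q i) && ~~ Q i) F i = \prod_(i | P i && ~~ Q i) F i.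
  by apply: eq_bigl => i; case: (P i); case: (Q i).
rewrite e1 e2; ring.
Qed.

Section NT.
Local Open Scope nat_scope.
Variables (p q m n : nat).
Hypotheses (pp : prime p) (pq : prime q) (neq : p != q).

Lemma cop_pq : coprime p q.
Proof. by rewrite prime_coprime // dvdn_prime2. Qed.

Lemma copAB k l : coprime (p ^ k) (q ^ l).
Proof. by apply: coprimeXl; apply: coprimeXr; exact: cop_pq. Qed.

Lemma dvd_split d : d %| p ^ m.+1 * q ^ n.+1 -> d != p ^ m.+1 * q ^ n.+1 ->
  (d %| p ^ m * q ^ n.+1) || (d %| p ^ m.+1 * q ^ n).
Proof.
move=> dAB ne.
have [k km gE] : exists2 k, (k <= m.+1)%N & gcdn d (p ^ m.+1) = (p ^ k)%N.
  by apply/dvdn_pfactor => //; rewrite dvdn_gcdr.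
have [l ln hE] : exists2 l, (l <= n.+1)%N & gcdn d (q ^ n.+1) = (q ^ l)%N.
  by apply/dvdn_pfactor => //; rewrite dvdn_gcdr.
have d1 : d %| gcdn d (p ^ m.+1) * q ^ n.+1 by rewrite muln_gcdl dvdn_gcd dvdn_mulr.
have d2 : d %| p ^ m.+1 * gcdn d (q ^ n.+1) by rewrite muln_gcdr dvdn_gcd dvdn_mull.
case: (ltnP k m.+1) => [kl|kg].
  apply/orP; left; apply: (dvdn_trans d1); rewrite dvdn_pmul2r ?expn_gt0 ?prime_gt0 //.
  by rewrite gE dvdn_exp2l.
case: (ltnP l n.+1) => [ll|lg].
  apply/orP; right; apply: (dvdn_trans d2); rewrite dvdn_pmul2l ?expn_gt0 ?prime_gt0 //.
  by rewrite hE dvdn_exp2l.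
have kE : k = m.+1 by lia.
have lE : l = n.+1 by lia.
have Ad : p ^ m.+1 %| d by rewrite -kE -gE dvdn_gcdl.
have Bd : q ^ n.+1 %| d by rewrite -lE -hE dvdn_gcdl.
have : p ^ m.+1 * q ^ n.+1 %| d by rewrite Gauss_dvd ?copAB ?Ad.
move=> ABd; case/negP: ne; rewrite eqn_dvd dAB ABd.
done.
Qed.

Lemma dvd_both d : (d %| p ^ m * q ^ n.+1) && (d %| p ^ m.+1 * q ^ n) = (d %| p ^ m * q ^ n).
Proof.
rewrite -dvdn_gcd !expnS.
have -> : p ^ m * (q * q ^ n) = (p ^ m * q ^ n) * q by lia.
have -> : p * p ^ m * q ^ n = (p ^ m * q ^ n) * p by lia.
have cqp : coprime q p by rewrite coprime_sym cop_pq.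
by rewrite -muln_gcdr (eqP cqp) muln1.
Qed.

End NT.

Lemma cyc_id (p q m n : nat) : prime p -> prime q -> p != q ->
  Cyclotomic (p ^ m.+1 * q ^ n.+1) * ('X^(p ^ m * q ^ n.+1) - 1) * ('X^(p ^ m.+1 * q ^ n) - 1)
  = ('X^(p ^ m.+1 * q ^ n.+1) - 1) * ('X^(p ^ m * q ^ n) - 1).
Proof.
move=> pp pq neq.
have p1 : (1 < p)%N by apply: prime_gt1.
have q1 : (1 < q)%N by apply: prime_gt1.
have Pm : (0 < p ^ m)%N by rewrite expn_gt0 (ltnW p1).
have Qn : (0 < q ^ n)%N by rewrite expn_gt0 (ltnW q1).
have EP : (p ^ m.+1 = p * p ^ m)%N by rewrite expnS.
have EQ : (q ^ n.+1 = q * q ^ n)%N by rewrite expnS.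
set AB := (p ^ m.+1 * q ^ n.+1)%N.
have h1 : (0 < p ^ m * q ^ n.+1)%N by rewrite EQ; nia.
have h2 : (0 < p ^ m.+1 * q ^ n)%N by rewrite EP; nia.
have h3 : (0 < p ^ m * q ^ n)%N by nia.
have h0 : (0 < AB)%N by rewrite /AB EP EQ; nia.
have l1 : (p ^ m * q ^ n.+1 < AB.+1)%N by rewrite /AB EP EQ; nia.
have l2 : (p ^ m.+1 * q ^ n < AB.+1)%N by rewrite /AB EP EQ; nia.
have l3 : (p ^ m * q ^ n < AB.+1)%N by rewrite /AB EP EQ; nia.
rewrite -!prod_Cyclotomic // (prod_div _ _ _ h1 l1) (prod_div _ _ _ h2 l2) (prod_div _ _ _ h3 l3).
rewrite (prod_div _ _ _ h0 (ltnSn AB)).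
rewrite [\prod_(i < AB.+1 | (i %| AB)%N) _](bigD1 (Ordinal (ltnSn AB))) /= ?dvdnn //.
rewrite -!mulrA prodU; congr (_ * (_ * _)); first symmetry.
  apply: eq_bigl => i; apply/idP/idP.
    case/andP => dv ne; apply: (@dvd_split p q m n pp pq neq i dv).
    by move: ne; apply: contra => /eqP e; apply/eqP; apply: val_inj.
  move=> h; apply/andP; split.
    case/orP: h => h; apply: (dvdn_trans h); rewrite /AB.
      by apply: dvdn_mul => //; rewrite dvdn_exp2l.
    by apply: dvdn_mul => //; rewrite dvdn_exp2l.
  apply/negP => /eqP /(congr1 val) /= ie.
  case/orP: h => h; have := dvdn_leq _ h; rewrite ie /AB EP EQ; nia.
by apply: eq_bigl => i; rewrite (@dvd_both p q m n pp pq neq).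
Qed.

Lemma alt_coef (Q : {poly int}) (t : nat -> bool) :
  (forall N, Q`_N = (t N)%:Z - (if N is N'.+1 then (t N')%:Z else 0)) ->
  (forall i, Q`_i != 0 -> Q`_i = 1 \/ Q`_i = -1) /\
  (forall i j, (i < j)%N -> Q`_i != 0 -> Q`_j != 0 ->
           (forall k, (i < k < j)%N -> Q`_k = 0) -> Q`_j = - Q`_i).
Proof.
pose pr N := if N is N'.+1 then t N' else false.
have hpr N : (if N is N'.+1 then (t N')%:Z else 0) = (pr N)%:Z by case: N.
move=> hQ; split.
  by move=> i; rewrite hQ hpr; case: (t i); case: (pr i) => /=; auto.
move=> i j ij; rewrite !hQ !hpr => hi hj hk.
have key : forall k, (i < k <= j)%N -> pr k = t i.
  move=> k /andP[]; elim: k => [//|k IH] ik kj.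
  case: (ltngtP i k) => [lt|gt|<-] //; last by lia.
  have := hk k; rewrite lt (leq_trans (ltnSn k) kj) => /(_ isT).
  rewrite hQ hpr /= -IH //; last by lia.
  by case: (t k); case: (pr k).
have := key j; rewrite ij leqnn => /(_ isT) pj.
move: hi hj; rewrite pj.
by case: (t i); case: (t j); case: (pr i).
Qed.

Lemma tt_large (T : finType) a (e : T -> nat) B N : (0 < a)%N ->
  (forall x y, e x = e y %[mod a] -> x = y) -> #|T| = a ->
  (forall x, e x <= B)%N -> (B <= N)%N -> tt _ a e N.
Proof.
move=> a0 einj cT hB BN.
have [x hx] := @res_onto T a e a0 einj cT N.
by apply/existsP; exists x; rewrite (leq_trans (hB x)) //= hx.
Qed.

Lemma in_sg2_tt a b N : (0 < a)%N -> (0 < b)%N ->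
  in_sg2 a b N = tt _ a (fun j : 'I_a => (j * b)%N) N.
Proof.
move=> a0 b0; rewrite /in_sg2; apply/idP/idP.
  case/existsP => i /existsP [j /eqP hN].
  apply/existsP; exists (Ordinal (ltn_pmod j a0)) => /=; apply/andP; split.
    apply: (leq_trans (leq_mul (leq_mod j a) (leqnn b))).
    by apply: (leq_trans _ (_ : (i * a + j * b <= N)%N)); rewrite ?leq_addl // -hN.
  have -> : (N %% a = (i * a + j * b) %% a)%N by rewrite -hN.
  by rewrite modnMml modnMDl.
case/existsP => x /andP [le eqm].
have i1 : ((N - x * b) %/ a < N.+1)%N.
  by rewrite ltnS (leq_trans (leq_div _ _)) // leq_subr.
have i2 : (x < N.+1)%N by rewrite ltnS (leq_trans _ le) // leq_pmulr.
apply/existsP; exists (Ordinal i1); apply/existsP; exists (Ordinal i2) => /=.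
move: eqm; rewrite eq_sym eqn_mod_dvd // => dv.
by rewrite divnK // subnK.
Qed.

Lemma e1_inj a b (x y : 'I_a) : coprime b a ->
  (x * b)%N = (y * b)%N %[mod a] -> x = y.
Proof.
move=> c /eqP; rewrite mod_cancel // !modn_small // => /eqP h.
exact: val_inj.
Qed.

Lemma e2_inj a' p b b' (x y : 'I_a' * 'I_p) : coprime b a' -> coprime b' p ->
  (x.1 * b + x.2 * (b' * a'))%N = (y.1 * b + y.2 * (b' * a'))%N %[mod a' * p] ->
  x = y.
Proof.
case: x => x1 x2; case: y => y1 y2 /= c1 c2 h.
have dv : (a' %| a' * p)%N by apply: dvdn_mulr.
have h1 : (x1 * b + x2 * (b' * a'))%N = (y1 * b + y2 * (b' * a'))%N %[mod a'].
  by rewrite -[LHS](modn_dvdm _ dv) h modn_dvdm.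
move: h1; rewrite !mulnA ![(_ * b + _)%N]addnC !modnMDl => /eqP.
rewrite mod_cancel // !modn_small // => /eqP e1.
have E1 : x1 = y1 by apply: val_inj.
move: h; rewrite E1 => /eqP; rewrite eqn_modDl !mulnA [(a' * p)%N]mulnC.
rewrite mod_cancel2; last exact: (leq_ltn_trans (leq0n _) (ltn_ord y1)).
rewrite mod_cancel // !modn_small // => /eqP e2.
by congr pair; apply: val_inj.
Qed.

Lemma assemble (S Q C Hs A xa xb xc xd xe x1 xab : {poly int}) :
  S * xa = x1 * Hs -> Hs * xb = xab -> Q * xa = x1 * A ->
  A * (xb * xc) = xd * xe -> C * xd * xe = xab * xc ->
  xa * xb * xc * xd * xe != 0 -> S = Q * C.
Proof.
move=> h1 h2 h3 h4 h5 nz; apply: (mulIf nz); apply/eqP; rewrite -subr_eq0.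
have E : S * (xa * xb * xc * xd * xe) - Q * C * (xa * xb * xc * xd * xe) =
  (S * xa - x1 * Hs) * xb * xc * xd * xe + x1 * xc * xd * xe * (Hs * xb - xab)
  - (Q * xa - x1 * A) * C * xb * xc * xd * xe
  - x1 * C * xd * xe * (A * (xb * xc) - xd * xe)
  - x1 * xd * xe * (C * xd * xe - xab * xc) by ring.
by rewrite E h1 h2 h3 h4 h5 !subrr !(mulr0, mul0r, subr0, addr0).
Qed.

Lemma lcX k : (0 < k)%N -> lead_coef ('X^k - 1 : {poly int}) = 1.
Proof. by move=> k0; apply/monicP; rewrite -polyC1 monicXnsubC. Qed.

Lemma nzX k : (0 < k)%N -> ('X^k - 1 : {poly int}) != 0.
Proof. by move=> k0; apply: monic_neq0; rewrite -polyC1 monicXnsubC. Qed.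

Theorem theorem4 (p q m n : nat) :
  prime p -> prime q -> p != q -> (0 < m)%N -> (0 < n)%N ->
  exists Q : {poly int},
    [/\ sgP (p ^ m) (q ^ n) = Q * Cyclotomic (p ^ m * q ^ n),
        Q \is monic,
        Q`_0 = 1,
        (forall i, Q`_i != 0 -> Q`_i = 1 \/ Q`_i = -1) &
        (forall i j, (i < j)%N -> Q`_i != 0 -> Q`_j != 0 ->
           (forall k, (i < k < j)%N -> Q`_k = 0) -> Q`_j = - Q`_i)].
Proof.
move=> pp pq neq m0 n0.
case: m m0 => [//|m] _; case: n n0 => [//|n] _.
have Cyc := cyc_id p q m n pp pq neq.
have cAB := copAB p q pp pq neq.
have p1 := prime_gt1 pp; have q1 := prime_gt1 pq.
set a := (p ^ m.+1)%N in Cyc *; set b := (q ^ n.+1)%N in Cyc *.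
set a' := (p ^ m)%N in Cyc *; set b' := (q ^ n)%N in Cyc *.
have a'0 : (0 < a')%N by rewrite expn_gt0 (ltnW p1).
have b'0 : (0 < b')%N by rewrite expn_gt0 (ltnW q1).
have Ea : a = (a' * p)%N by rewrite /a expnSr.
have Eb : b = (b' * q)%N by rewrite /b expnSr.
have a0 : (0 < a)%N by rewrite Ea muln_gt0 a'0 (ltnW p1).
have b0 : (0 < b)%N by rewrite Eb muln_gt0 b'0 (ltnW q1).
have cba : coprime b a by rewrite coprime_sym cAB.
have cba' : coprime b a' by rewrite coprime_sym cAB.
have cb'p : coprime b' p by rewrite coprime_sym -(expn1 p) cAB.
pose e1 := fun j : 'I_a => (j * b)%N.
have e1inj : forall x y, e1 x = e1 y %[mod a] -> x = y.
  by move=> x y; apply: e1_inj.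
have hS : forall N, (sgP a b)`_N =
    (tt _ a e1 N)%:Z - (if N is N'.+1 then (tt _ a e1 N')%:Z else 0).
  move=> N; rewrite /sgP coef_poly /sgP_coef.
  case: ifP => hN.
    by case: N hN => [|N] hN; rewrite !in_sg2_tt.
  case: N hN => [//|N]; rewrite ltnS => /negbT; rewrite -ltnNge => hN.
  have bd : forall x, (e1 x <= a * b)%N.
    by move=> x; rewrite /e1 leq_mul // ltnW.
  rewrite !(@tt_large _ a e1 (a * b) _ a0 e1inj (card_ord a) bd) ?subrr //; lia.
pose H1 := \sum_(x : 'I_a) 'X^(e1 x) : {poly int}.
have I1 : sgP a b * ('X^a - 1) = ('X - 1) * H1.
  apply: (@poly_rec _ _ _ _ a a0 hS).
    by move=> N; rewrite (@coef_sumX _ a e1 e1inj).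
  by move=> N; rewrite (@tt_recZ _ a e1 a0 e1inj).
have I2 : H1 * ('X^b - 1) = 'X^(a * b) - 1 by rewrite /H1 geomX.
pose e2 := fun x : 'I_a' * 'I_p => (x.1 * b + x.2 * (b' * a'))%N.
have e2inj : forall x y, e2 x = e2 y %[mod a] -> x = y.
  by move=> x y; rewrite Ea; apply: e2_inj.
have c2 : #|{: 'I_a' * 'I_p}| = a by rewrite card_prod !card_ord Ea.
pose B := (a' * b + p * (b' * a'))%N.
have bd2 : forall x, (e2 x <= B)%N.
  move=> [x1 x2]; rewrite /e2 /B /=; apply: leq_add; apply: leq_mul => //; exact: ltnW.
pose Q := \poly_(N < B.+1)
  ((tt _ a e2 N)%:Z - (if N is N'.+1 then (tt _ a e2 N')%:Z else 0)).
have hQ : forall N, Q`_N =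
    (tt _ a e2 N)%:Z - (if N is N'.+1 then (tt _ a e2 N')%:Z else 0).
  move=> N; rewrite coef_poly; case: ifP => // /negbT; rewrite -leqNgt => hN.
  case: N hN => [//|N] hN.
  rewrite !(@tt_large _ a e2 B _ a0 e2inj c2 bd2) ?subrr //; lia.
pose H2 := \sum_(x : 'I_a' * 'I_p) 'X^(e2 x) : {poly int}.
have I3 : Q * ('X^a - 1) = ('X - 1) * H2.
  apply: (@poly_rec _ _ _ _ a a0 hQ).
    by move=> N; rewrite (@coef_sumX _ a e2 e2inj).
  by move=> N; rewrite (@tt_recZ _ a e2 a0 e2inj).
have I4 : H2 * (('X^b - 1) * ('X^(a' * b') - 1)) = ('X^(a' * b) - 1) * ('X^(a * b') - 1).
  have -> : H2 = (\sum_(i < a') 'X^(i * b)) * (\sum_(j < p) 'X^(j * (b' * a'))).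
    rewrite /H2 big_distrlr /= pair_bigA; apply: eq_bigr => [[i j]] _.
    by rewrite /e2 /= exprD.
  rewrite mulrACA geomX [(a' * b')%N]mulnC geomX.
  by have -> : (p * (b' * a'))%N = (a * b')%N by rewrite Ea; lia.
have nz : ('X^a - 1) * ('X^b - 1) * ('X^(a' * b') - 1) * ('X^(a' * b) - 1) *
    ('X^(a * b') - 1) != 0 :> {poly int}.
  by rewrite !mulf_neq0 // nzX // ?muln_gt0 ?a0 ?b0 ?a'0 ?b'0.
exists Q; split.
- exact: (assemble _ _ _ _ _ _ _ _ _ _ _ _ I1 I2 I3 I4 Cyc nz).
- apply/monicP.
  have := congr1 lead_coef I4; rewrite !lead_coefM !lcX ?muln_gt0 ?a0 ?b0 ?a'0 ?b'0 //.
  rewrite !mulr1 => lH2.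
  have := congr1 lead_coef I3; rewrite !lead_coefM lH2 lcX // mulr1 => ->.
  by rewrite -(expr1 'X) lcX.
- rewrite hQ subr0.
  have -> : tt _ a e2 0 = true; last by [].
  apply/existsP; exists (Ordinal a'0, Ordinal (ltnW p1)) => /=.
  by rewrite /e2 /= !mul0n.
- exact: (alt_coef _ _ hQ).1.
- exact: (alt_coef _ _ hQ).2.
Qed.
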